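(* Let $\mathcal H$ be a well-structured preconditioner set and $M\in\mathcal S^d_{++}$. Then the Frobenius-norm projection of $M$ onto $\mathcal H$, $\operatorname{proj}_{\mathcal H}(M)=\arg\min_{H\in\mathcal H}\|M-H\|_F^2$, equals $P_{\mathcal H}(M)^2$.
   Context: $\mathcal S^d_+$ (resp. $\mathcal S^d_{++}$) denotes the set of real symmetric positive semidefinite (resp. positive definite) $d\times d$ matrices; $\langle A,B\rangle=\operatorname{Tr}(A^\top B)$. A set $\mathcal H\subseteq\mathcal S_+^d$ is a well-structured preconditioner set if $\mathcal H=\mathcal S_+^d\cap\mathcal K$ for some set $\mathcal K$ of real $d\times d$ matrices that is closed under scalar multiplication, matrix addition and matrix multiplication and contains the identity $I_d$. For $M\in\mathcal S^d_{++}$, $P_{\mathcal H}(M):=\arg\min_{H\in\mathcal H\cap\mathcal S^d_{++}}\langle M,H^{-1}\rangle+\operatorname{Tr}(H)$ (the minimizer exists and is unique). *)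

(* Defs.v *)
From HB Require Import structures.
From mathcomp Require Import all_boot all_order all_algebra.
From mathcomp Require Import reals.
Set Implicit Arguments. Unset Strict Implicit. Unset Printing Implicit Defensive.
Import Order.TTheory GRing.Theory Num.Theory.
Local Open Scope ring_scope.

Section Defs.
Variables (R : realType) (d : nat).

Definition psd (A : 'M[R]_d) : Prop :=
  A^T = A /\ forall x : 'cV[R]_d, 0 <= (x^T *m A *m x) 0 0.

Definition pd (A : 'M[R]_d) : Prop :=
  A^T = A /\ forall x : 'cV[R]_d, x != 0 -> 0 < (x^T *m A *m x) 0 0.

Definition frob_inner (A B : 'M[R]_d) : R := \tr (A^T *m B).

Definition frob_sq (A : 'M[R]_d) : R := \sum_(i < d) \sum_(j < d) (A i j) ^+ 2.

Definition matrix_algebra_set (K : 'M[R]_d -> Prop) : Prop :=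
  [/\ forall (a : R) A, K A -> K (a *: A),
      forall A B, K A -> K B -> K (A + B),
      forall A B, K A -> K B -> K (A *m B)
    & K 1%:M].

Definition well_structured (Hs : 'M[R]_d -> Prop) : Prop :=
  exists K : 'M[R]_d -> Prop,
    matrix_algebra_set K /\ forall A, Hs A <-> (psd A /\ K A).

Definition is_PH (Hs : 'M[R]_d -> Prop) (M P : 'M[R]_d) : Prop :=
  (Hs P /\ pd P) /\
  forall H, Hs H -> pd H ->
    frob_inner M (invmx P) + \tr P <= frob_inner M (invmx H) + \tr H.

Definition is_frob_proj (Hs : 'M[R]_d -> Prop) (M Q : 'M[R]_d) : Prop :=
  Hs Q /\ forall H, Hs H -> frob_sq (M - Q) <= frob_sq (M - H).

End Defs.

(* Main.v *)
Require Import Defs.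
From HB Require Import structures.
From mathcomp Require Import all_boot all_order all_algebra.
From mathcomp Require Import reals.
From mathcomp.algebra_tactics Require Import ring lra.
Import Order.TTheory GRing.Theory Num.Theory.
Local Open Scope ring_scope.
Set Implicit Arguments. Unset Strict Implicit. Unset Printing Implicit Defensive.

Section Aux.
Variables (R : realType) (d : nat).

Lemma quad_disc (a b c : R) : 0 <= c ->
  (forall s, 0 <= a + 2 * s * b + s ^+ 2 * c) -> b ^+ 2 <= a * c.
Proof.
move=> c0 H; have [cz|cp] := eqVneq c 0.
  have [bz|bn] := eqVneq b 0; first by rewrite bz cz; lra.
  have := H (- (a + 1) / (2 * b)).
  have -> : 2 * (- (a + 1) / (2 * b)) * b = - (a + 1) by field; rewrite bn.
  rewrite cz; lra.
have cg : 0 < c by rewrite lt0r cp.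
have := H (- (b / c)).
have sc : (b / c) * c = b by field.
move: (b / c) sc => s sc h.
have e : b ^+ 2 - a * c = c * (s * b - a) by rewrite -sc; ring.
have : c * (s * b - a) <= 0.
  apply: mulr_ge0_le0; first lra. nra.
lra.
Qed.

Implicit Types (A B C G : 'M[R]_d) (x y u v : 'cV[R]_d).
Definition bf A u v : R := (u^T *m A *m v) 0 0.
Definition qf A u : R := bf A u u.

Lemma bfDl A B u v : bf (A + B) u v = bf A u v + bf B u v.
Proof. by rewrite /bf mulmxDr mulmxDl mxE. Qed.
Lemma bfZl a A u v : bf (a *: A) u v = a * bf A u v.
Proof. by rewrite /bf -scalemxAr -scalemxAl mxE. Qed.
Lemma bfDr A u v w : bf A u (v + w) = bf A u v + bf A u w.
Proof. by rewrite /bf mulmxDr mxE. Qed.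
Lemma bfDm A u v w : bf A (u + v) w = bf A u w + bf A v w.
Proof. by rewrite /bf linearD /= !mulmxDl mxE. Qed.
Lemma bfZr a A u v : bf A u (a *: v) = a * bf A u v.
Proof. by rewrite /bf -scalemxAr mxE. Qed.
Lemma bfZm a A u v : bf A (a *: u) v = a * bf A u v.
Proof. by rewrite /bf linearZ /= -!scalemxAl mxE. Qed.
Lemma bfNl A u v : bf (- A) u v = - bf A u v.
Proof. by rewrite -scaleN1r bfZl mulN1r. Qed.
Lemma bf_sym A u v : A^T = A -> bf A u v = bf A v u.
Proof.
move=> sA; rewrite /bf.
transitivity ((u^T *m A *m v)^T 0 0); first by rewrite [RHS]mxE.
by rewrite !trmx_mul trmxK sA mulmxA.
Qed.

Lemma qf_sub A u v : A^T = A ->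
  qf A (u - v) = qf A u - 2 * bf A u v + qf A v.
Proof.
move=> sA; rewrite /qf.
rewrite -scaleN1r bfDm !bfDr !bfZr !bfZm (bf_sym v u sA); ring.
Qed.

Lemma qf_add A u v s : A^T = A ->
  qf A (u + s *: v) = qf A u + 2 * s * bf A u v + s ^+ 2 * qf A v.
Proof.
move=> sA; rewrite /qf bfDm !bfDr !bfZr !bfZm (bf_sym v u sA); ring.
Qed.

Lemma cs_psd A u v : psd A -> bf A u v ^+ 2 <= qf A u * qf A v.
Proof.
case=> sA pA; apply: quad_disc; first exact: pA.
by move=> s; rewrite -qf_add //; apply: pA.
Qed.

Definition ev (i : 'I_d) : 'cV[R]_d := delta_mx i 0.

Lemma bf_ev A (i : 'I_d) v : bf A (ev i) v = (A *m v) i 0.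
Proof. by rewrite /bf /ev trmx_delta -mulmxA -rowE mxE. Qed.

Lemma qf_ev A (i : 'I_d) : qf A (ev i) = A i i.
Proof. by rewrite /qf bf_ev /ev mxE (bigD1 i) //= mxE !eqxx mulr1 big1 ?addr0 // => j /negbTE ji; rewrite mxE ji mulr0. Qed.

Lemma qf1E w : qf 1%:M w = \sum_i (w i 0) ^+ 2.
Proof. by rewrite /qf /bf mulmx1 mxE; apply: eq_bigr => i _; rewrite mxE expr2. Qed.

Lemma qf1_ge0 w : 0 <= qf 1%:M w.
Proof. by rewrite qf1E sumr_ge0 // => i _; rewrite sqr_ge0. Qed.

Lemma psd1 : psd (1%:M : 'M[R]_d).
Proof. by split; [rewrite trmx1 | move=> x; exact: qf1_ge0]. Qed.

Lemma trE A : \tr A = \sum_i qf A (ev i).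
Proof. by apply: eq_bigr => i _; rewrite qf_ev. Qed.

Lemma qf_tr X x : psd X -> qf X x <= qf 1%:M x * \tr X.
Proof.
move=> pX; have q0 : 0 <= qf X x by case: pX => _; apply.
have e1 : qf X x = bf 1%:M x (X *m x) by rewrite /qf /bf mulmx1 mulmxA.
have h1 := cs_psd x (X *m x) psd1.
have h2 : qf 1%:M (X *m x) <= \tr X * qf X x.
  rewrite qf1E trE mulr_suml; apply: ler_sum => i _.
  by rewrite -bf_ev; apply: cs_psd.
rewrite -e1 in h1.
have [z|p] := eqVneq (qf X x) 0.
  by rewrite z mulr_ge0 ?qf1_ge0 // trE sumr_ge0 // => i _; case: pX => _; apply.
have qp : 0 < qf X x by rewrite lt0r p q0.
have h3 : qf X x ^+ 2 <= qf 1%:M x * \tr X * qf X x.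
  apply: (le_trans h1); rewrite -mulrA; apply: ler_wpM2l => //; exact: qf1_ge0.
rewrite expr2 ler_pM2r // in h3.
Qed.

Lemma pd_unit A : pd A -> A \in unitmx.
Proof.
case=> sA pA; rewrite -row_free_unit -kermx_eq0; apply/eqP/row_matrixP => i.
rewrite row0; apply/eqP; apply/negPn/negP => nz.
have w0 : (row i (kermx A))^T != 0 by rewrite trmx_eq0.
have := pA _ w0; rewrite trmxK -row_mul mulmx_ker row0 mul0mx mxE ltxx //.
Qed.

Lemma pd_psd A : pd A -> psd A.
Proof.
case=> sA pA; split => // x; have [->|nz] := eqVneq x 0.
  by rewrite mulmx0 mxE.
exact/ltW/pA.
Qed.

Lemma inv_sym A : A^T = A -> (invmx A)^T = invmx A.
Proof. by move=> sA; rewrite trmx_inv sA. Qed.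

Lemma pd_inv A : pd A -> pd (invmx A).
Proof.
move=> pdA; have uA := pd_unit pdA; case: pdA => sA pA.
split; first exact: inv_sym.
move=> x nz; set y := invmx A *m x.
have y0 : y != 0.
  apply: contraNneq nz => y0; rewrite -(mul1mx x) -(mulmxV uA) -mulmxA -/y y0.
  by rewrite mulmx0.
have := pA _ y0; congr (_ < _).
rewrite /y trmx_mul (inv_sym sA) -!mulmxA (mulmxA A) mulmxV // mul1mx.
by rewrite mulmxA.
Qed.

Lemma qf_inv_ge0 P x : pd P -> 0 <= qf (invmx P) x.
Proof. by move=> /pd_inv /pd_psd [_]; apply. Qed.

Lemma coerc P x : pd P -> qf 1%:M x <= \tr P * qf (invmx P) x.
Proof.
move=> pdP; have uP := pd_unit pdP; have psP := pd_psd pdP.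
have psPi := pd_psd (pd_inv pdP).
have e1 : bf (invmx P) x (P *m x) = qf 1%:M x.
  by rewrite /qf /bf mulmx1 -mulmxA (mulmxA (invmx P)) mulVmx // mul1mx.
have e2 : qf (invmx P) (P *m x) = qf P x.
  rewrite /qf /bf trmx_mul psP.1 -!mulmxA (mulmxA (invmx P)) mulVmx // mul1mx.
  by rewrite mulmxA.
have h := cs_psd x (P *m x) psPi; rewrite e1 e2 in h.
have h2 := qf_tr x psP.
have q0 := qf1_ge0 x; have qi0 := qf_inv_ge0 x pdP.
have [z|nz] := eqVneq (qf 1%:M x) 0.
  by rewrite z mulr_ge0 // trE sumr_ge0 // => i _; case: psP => _; apply.
have qp : 0 < qf 1%:M x by rewrite lt0r nz q0.
have h3 : qf 1%:M x ^+ 2 <= qf (invmx P) x * (qf 1%:M x * \tr P).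
  by apply: (le_trans h); apply: ler_wpM2l.
rewrite expr2 mulrCA ler_pM2l // in h3.
by rewrite mulrC.
Qed.

Lemma inv_bound P G (a : R) b : pd P -> pd G -> 0 < a ->
  (forall x, a * qf (invmx P) x <= qf G x) -> a * qf (invmx G) b <= qf P b.
Proof.
move=> pdP pdG a0 H; have uP := pd_unit pdP; have uG := pd_unit pdG.
have sP := (pd_psd pdP).1; have sG := (pd_psd pdG).1.
have psPi := pd_psd (pd_inv pdP).
set y := invmx G *m b.
have e1 : qf (invmx G) b = qf G y.
  rewrite /qf /bf /y trmx_mul (inv_sym sG) -!mulmxA.
  by rewrite (mulmxA G) mulmxV // mul1mx.
have e2 : bf (invmx P) y (P *m b) = qf G y.
  rewrite /qf /bf (mulmxA _ P) -(mulmxA _ (invmx P)) mulVmx // mulmx1.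
  by rewrite /y -mulmxA (mulmxA G) mulmxV // mul1mx.
have e3 : qf (invmx P) (P *m b) = qf P b.
  rewrite /qf /bf trmx_mul sP -!mulmxA (mulmxA (invmx P)) mulVmx // mul1mx.
  by rewrite mulmxA.
have h : 0 <= qf (invmx P) (a *: y - P *m b) := psPi.2 _.
rewrite qf_sub ?(inv_sym sP) // /qf !bfZm bfZr -/(qf (invmx P) y) -/(qf (invmx P) (P *m b)) e2 e3 in h.
have h2 := H y.
rewrite e1; nra.
Qed.

Lemma tr_qf_col (B C : 'M[R]_d) : \tr (B^T *m C *m B) = \sum_i qf C (col i B).
Proof.
apply: eq_bigr => i _; rewrite colE.
have -> : qf C (B *m delta_mx i 0) = qf (B^T *m C *m B) (ev i)
  by rewrite /qf /bf /ev trmx_mul !mulmxA.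
by rewrite qf_ev.
Qed.

Lemma qfDZ A B s x : qf (A + s *: B) x = qf A x + s * qf B x.
Proof. by rewrite /qf bfDl bfZl. Qed.

Lemma real_zero (a K del : R) : 0 < del -> 0 <= K ->
  (forall s, `|s| <= del -> 0 <= s * a + s ^+ 2 * K) -> a = 0.
Proof.
move=> dp K0 H.
have key : forall a', (forall s, 0 <= s -> s <= del -> 0 <= s * a' + s ^+ 2 * K) -> 0 <= a'.
  move=> a' H'; rewrite leNgt; apply/negP => an.
  pose e := Num.min del (- a' / (2 * K + 1)).
  have Kp : 0 < 2 * K + 1 by lra.
  have ep : 0 < e by rewrite lt_min dp /= divr_gt0 //; lra.
  have e1 : e <= del by rewrite ge_min lexx.
  have e2 : e * (2 * K + 1) <= - a'.
    by rewrite -ler_pdivlMr // ge_min lexx orbT.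
  have := H' e (ltW ep) e1; nra.
have h1 : 0 <= a by apply: key => s s0 sd; apply: H; rewrite ger0_norm.
have h2 : 0 <= - a.
  apply: key => s s0 sd; have := H (- s); rewrite normrN ger0_norm // => /(_ sd).
  by rewrite sqrrN mulNr mulrN.
lra.
Qed.
End Aux.

Lemma alg_inv (R : realType) (n : nat) (K : 'M[R]_n -> Prop) (A : 'M[R]_n) :
  matrix_algebra_set K -> K A -> A \in unitmx -> K (invmx A).
Proof.
case=> hZ hD hM h1 KA uA.
case: n K A hZ hD hM h1 KA uA => [|n] K A hZ hD hM h1 KA uA.
  have -> : invmx A = 1%:M by apply/matrixP => [[]].
  exact: h1.
have hP : forall p, K (horner_mx A p).
  elim/poly_ind => [|p c IH].
    by rewrite rmorph0 -(scale0r (1%:M : 'M[R]_n.+1)); apply: hZ.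
  rewrite rmorphD rmorphM /= horner_mx_X horner_mx_C -scalemx1.
  by apply: hD; [apply: hM | apply: hZ].
set p := char_poly A.
have ht : take_poly 1 p = (p`_0)%:P.
  apply/polyP => i; rewrite coef_take_poly coefC; by case: i.
have := Cayley_Hamilton A; rewrite -/p -(poly_take_drop 1 p) ht rmorphD rmorphM /=.
rewrite horner_mx_C rmorphXn /= horner_mx_X expr1.
set Q := horner_mx A (drop_poly 1 p) => e.
have e2 : Q *m A = - (p`_0) *: 1%:M.
  by rewrite scaleNr scalemx1; apply/eqP; rewrite -addr_eq0 addrC; apply/eqP; exact: e.
have p0 : p`_0 != 0.
  rewrite /p char_poly_det mulf_neq0 ?signr_eq0 //.
  by move: uA; rewrite unitmxE unitfE.
have -> : invmx A = (- (p`_0)^-1) *: Q.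
  have : Q *m A *m invmx A = - (p`_0) *: invmx A by rewrite e2 -scalemxAl mul1mx.
  rewrite -mulmxA mulmxV // mulmx1 => ->.
  by rewrite scalerA mulrNN mulVf // scale1r.
by apply: hZ; apply: hP.
Qed.

Section Main.
Variables (R : realType) (d : nat) (Hs K : 'M[R]_d -> Prop) (M P : 'M[R]_d).
Hypotheses (hA : matrix_algebra_set K) (hK : forall A, Hs A <-> psd A /\ K A)
  (pdM : pd M) (hP : is_PH Hs M P).

Lemma inv_expand (Pi X G H : 'M[R]_d) s :
  P *m Pi = 1%:M -> Pi *m P = 1%:M -> G *m H = 1%:M -> H *m G = 1%:M ->
  G = Pi + s *: X ->
  H = P - s *: (P *m X *m P) + s ^+ 2 *: (P *m X *m H *m X *m P).
Proof.
move=> PPi PiP GH HG eG.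
have ea : H = P - s *: (H *m X *m P).
  have : H *m G *m P = P by rewrite HG mul1mx.
  rewrite eG mulmxDr mulmxDl -(mulmxA H Pi) PiP mulmx1 -scalemxAr -scalemxAl.
  by move=> e; apply/eqP; rewrite eq_sym subr_eq e.
have eb : H = P - s *: (P *m X *m H).
  have : P *m G *m H = P by rewrite -mulmxA GH mulmx1.
  rewrite eG mulmxDr mulmxDl PPi mul1mx -scalemxAr -scalemxAl.
  by move=> e; apply/eqP; rewrite eq_sym subr_eq e.
have e3 : H *m X *m P = P *m X *m P - s *: (P *m X *m H *m X *m P).
  by rewrite {1}eb !mulmxBl -!scalemxAl.
by rewrite {1}ea e3 scalerBr scalerA -expr2 opprB addrA addrAC.
Qed.


Lemma tr_psd_ge0 (A : 'M[R]_d) : psd A -> 0 <= \tr A.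
Proof. by move=> pA; rewrite trE sumr_ge0 // => i _; case: pA => _; apply. Qed.

Lemma key X : Hs X -> \tr (M *m X) = \tr (P *m P *m X).
Proof.
move=> /hK [psX KX].
have hA' := hA; case: hA' => hZ hD hM h1.
case: hP => [[HsP pdP] minP].
have [psP KP] := (hK P).1 HsP.
have uP := pd_unit pdP; set Pi := invmx P.
have KPi : K Pi := alg_inv hA KP uP.
have pdPi : pd Pi := pd_inv pdP.
have sPi : Pi^T = Pi := (pd_psd pdPi).1.
have sP := psP.1; have sX := psX.1.
set c := \tr X * \tr P.
have trX0 := tr_psd_ge0 psX; have trP0 := tr_psd_ge0 psP.
have c0 : 0 <= c by rewrite mulr_ge0.
have hc : forall x, qf X x <= c * qf Pi x.
  move=> x; have h1' := qf_tr x psX; have h2 := coerc x pdP.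
  have : qf 1%:M x * \tr X <= \tr P * qf (invmx P) x * \tr X by apply: ler_wpM2r.
  rewrite -/Pi /c => h3; apply: (le_trans h1'); apply: (le_trans h3).
  by rewrite mulrC mulrA.
set C0 := \sum_i qf P (col i (X *m P)).
have C00 : 0 <= C0 by rewrite sumr_ge0 // => i _; case: psP => _; apply.
apply/eqP; rewrite -subr_eq0; apply/eqP.
apply: (@real_zero _ _ (2 * C0) (1 / (2 * (c + 1)))).
- by rewrite divr_gt0 //; lra.
- lra.
move=> s hs.
have hsc : `|s| * c <= 1 / 2.
  have cp : 0 < 2 * (c + 1) by lra.
  have : `|s| * (2 * (c + 1)) <= 1 by rewrite -ler_pdivlMr.
  have := normr_ge0 s; nra.
have sa : - `|s| <= s by rewrite lerNl -normrN ler_norm.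
set G := Pi + s *: X.
have hG : forall x, 1 / 2 * qf Pi x <= qf G x.
  move=> x; rewrite /G qfDZ.
  have h1' := hc x; have h2 := psX.2 x; have h3 := qf_inv_ge0 x pdP; rewrite -/Pi in h3.
  have ns := normr_ge0 s.
  have s1 : 0 <= (s + `|s|) * qf X x by apply: mulr_ge0 => //; lra.
  have s2 : `|s| * qf X x <= `|s| * (c * qf Pi x) by apply: ler_wpM2l.
  have s3 : `|s| * c * qf Pi x <= 1 / 2 * qf Pi x by apply: ler_wpM2r.
  rewrite mulrA in s2.
  have : s * qf X x >= - (1 / 2 * qf Pi x) by nra.
  lra.
have sG : G^T = G by rewrite /G linearD linearZ /= sPi sX.
have pdG : pd G.
  split => // x nz; apply: lt_le_trans (hG x).
  by rewrite mulr_gt0 //; [lra | apply: pdPi.2].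
have KG : K G by apply: hD => //; apply: hZ.
set H := invmx G.
have pdH : pd H := pd_inv pdG.
have HsH : Hs H by apply/hK; split; [exact: pd_psd | exact: (alg_inv hA KG (pd_unit pdG))].
have := minP H HsH pdH.
rewrite /frob_inner /H invmxK -/H -/Pi pdM.1.
have eH := inv_expand (mulmxV uP) (mulVmx uP) (mulmxV (pd_unit pdG))
  (mulVmx (pd_unit pdG)) (erefl G).
rewrite -/H in eH; rewrite {1}eH /G mulmxDr mxtraceD -scalemxAr !mxtraceZ !mxtraceD raddfN /= !mxtraceZ.
have eT : \tr (P *m X *m H *m X *m P) = \sum_i qf H (col i (X *m P)).
  by rewrite -tr_qf_col trmx_mul sP sX !mulmxA.
have bT : \tr (P *m X *m H *m X *m P) <= 2 * C0.
  rewrite eT /C0 mulr_sumr; apply: ler_sum => i _.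
  have a0 : (0:R) < 1 / 2 by lra.
  have := inv_bound (col i (X *m P)) pdP pdG a0 hG.
  lra.
have eP : \tr (P *m X *m P) = \tr (P *m P *m X) by rewrite mxtrace_mulC mulmxA.
rewrite eP => h.
have s20 : 0 <= s ^+ 2 by rewrite sqr_ge0.
nra.
Qed.
End Main.

Section Final.
Variables (R : realType) (d : nat).

Lemma frob_tr (A : 'M[R]_d) : frob_sq A = \tr (A^T *m A).
Proof.
rewrite /frob_sq /mxtrace exchange_big; apply: eq_bigr => i _.
by rewrite mxE; apply: eq_bigr => j _; rewrite !mxE expr2.
Qed.

Lemma frob_ge0 (A : 'M[R]_d) : 0 <= frob_sq A.
Proof. by rewrite sumr_ge0 // => i _; rewrite sumr_ge0 // => j _; rewrite sqr_ge0. Qed.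

Lemma frob_eq0 (A : 'M[R]_d) : frob_sq A <= 0 -> A = 0.
Proof.
move=> h; have e : frob_sq A = 0 by apply/eqP; rewrite eq_le h frob_ge0.
apply/matrixP => i j; rewrite mxE.
have h1 : forall k, \sum_j A k j ^+ 2 = 0.
  move=> k; apply: (psumr_eq0P _ e) => // k' _.
  by rewrite sumr_ge0 // => ? _; exact: sqr_ge0.
have h2 : A i j ^+ 2 = 0.
  by apply: (psumr_eq0P _ (h1 i)) => // k _; exact: sqr_ge0.
by apply/eqP; rewrite -sqrf_eq0; apply/eqP.
Qed.
End Final.

Theorem lemmaA4 (R : realType) (d : nat) (Hs : 'M[R]_d -> Prop) (M P : 'M[R]_d) :
  well_structured Hs -> pd M -> is_PH Hs M P ->
  forall Q : 'M[R]_d, is_frob_proj Hs M Q <-> Q = P *m P.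
Proof.
move=> [K [hA hK]] pdM hP Q.
have E := key hA hK pdM hP.
have hA' := hA; case: hA' => hZ hD hM h1.
have [[HsP pdP] _] := hP.
have [psP KP] := (hK P).1 HsP.
have sP := psP.1; have sM := pdM.1.
set Q2 := P *m P.
have sQ2 : Q2^T = Q2 by rewrite /Q2 trmx_mul sP.
have HsQ2 : Hs Q2.
  apply/hK; split; last exact: hM.
  split => // x.
  have -> : (x^T *m Q2 *m x) 0 0 = qf 1%:M (P *m x).
    by rewrite /qf /bf /Q2 mulmx1 trmx_mul sP !mulmxA.
  exact: qf1_ge0.
have dec : forall H, Hs H -> frob_sq (M - H) = frob_sq (M - Q2) + frob_sq (Q2 - H).
  move=> H HsH; have sH := ((hK H).1 HsH).1.1.
  have -> : M - H = (M - Q2) + (Q2 - H) by rewrite addrA subrK.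
  rewrite !frob_tr.
  have z : \tr ((M - Q2)^T *m (Q2 - H)) = 0.
    rewrite [(M - Q2)^T]raddfB /= sM sQ2 mulmxBl !mulmxBr !raddfB /=.
    rewrite E // -/Q2 (E H HsH) -/Q2; ring.
  have z2 : \tr ((Q2 - H)^T *m (M - Q2)) = 0.
    by rewrite -mxtrace_tr trmx_mul trmxK.
  move: z z2; move: (M - Q2) (Q2 - H) => A B z z2.
  rewrite [(A + B)^T]raddfD /= mulmxDl !mulmxDr !mxtraceD z z2; ring.
split.
- case=> HsQ minQ.
  have := minQ Q2 HsQ2; rewrite (dec Q HsQ) => h.
  have : frob_sq (Q2 - Q) <= 0 by lra.
  by move/frob_eq0/eqP; rewrite subr_eq0 => /eqP.
- move=> ->; split => // H HsH.
  rewrite (dec H HsH); have := frob_ge0 (Q2 - H); lra.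
Qed.
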